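(* Consider an MDP with finite action set $\mathcal{A}$ partitioned into disjoint clusters $\{\mathcal{A}_c\}_{c\in\mathcal{C}}$, fix a state $s$, let $Q^\star$ be the optimal action-value function, $a^\star\in\arg\max_{a\in\mathcal{A}}Q^\star(s,a)$, and $c^\star$ the cluster containing $a^\star$. Let $\pi$ be a hierarchical policy $\pi(a\mid s)=\pi_{\mathrm{high}}(c\mid s)\,\pi_{\mathrm{low}}(a\mid s,c)$ for $a\in\mathcal{A}_c$, where $\pi_{\mathrm{low}}(\cdot\mid s,c)$ is supported on $\mathcal{A}_c$. Suppose the high-level policy selects a sub-optimal cluster $c\ne c^\star$ with probability $\epsilon_h=\pi_{\mathrm{high}}(c\mid s)$. Then the value regret $R=V^\star(s)-V^\pi(s)$ satisfies $$R\ge\epsilon_h\Big(Q^\star(s,a^\star)-\max_{a\in\mathcal{A}_c}Q^\star(s,a)\Big).$$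
   Context: $V^\star(s)=\max_a Q^\star(s,a)$ is the optimal value and $V^\pi(s)$ is the (discounted) value of policy $\pi$ at state $s$. *)

(* Defs.v *)
From mathcomp Require Import all_boot all_order all_algebra.
Set Implicit Arguments. Unset Strict Implicit. Unset Printing Implicit Defensive.
Import Order.TTheory GRing.Theory Num.Theory.
Local Open Scope ring_scope.

Section MDP.
Variables (R : realFieldType) (S A C : finType).

Definition is_distr (T : finType) (p : T -> R) : Prop :=
  (forall x, 0 <= p x) /\ \sum_x p x = 1.

Definition is_max_on (P : pred A) (f : A -> R) (m : R) : Prop :=
  (exists2 a, P a & m = f a) /\ (forall a, P a -> f a <= m).

Definition is_transition (Tr : S -> A -> S -> R) : Prop :=
  forall s a, is_distr (Tr s a).

(* Q* is the optimal action-value function and Vs = V* (s) = max_a Q*(s,a):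
   the (unique, for 0 <= gamma < 1) solution of the Bellman optimality equation *)
Definition is_optimal_Q (r : S -> A -> R) (Tr : S -> A -> S -> R) (gamma : R)
    (Q : S -> A -> R) (Vs : S -> R) : Prop :=
  (forall s, is_max_on predT (Q s) (Vs s)) /\
  (forall s a, Q s a = r s a + gamma * \sum_s' Tr s a s' * Vs s').

(* V is the discounted value of the stochastic policy pi (pi s a = pi(a|s)):
   the (unique, for 0 <= gamma < 1) solution of the policy Bellman equation *)
Definition is_policy_value (r : S -> A -> R) (Tr : S -> A -> S -> R) (gamma : R)
    (pi : S -> A -> R) (V : S -> R) : Prop :=
  forall s, V s = \sum_a pi s a * (r s a + gamma * \sum_s' Tr s a s' * V s').

(* cl a = the cluster c with a \in A_c (so the clusters partition A).
   Hierarchical policy: pi(a|s) = pi_high(c|s) pi_low(a|s,c) for a \in A_c. *)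
Definition hier_policy (cl : A -> C) (ph : S -> C -> R) (pl : S -> C -> A -> R)
    : S -> A -> R := fun s a => ph s (cl a) * pl s (cl a) a.

Definition is_hier (cl : A -> C) (ph : S -> C -> R) (pl : S -> C -> A -> R)
    : Prop :=
  (forall s, is_distr (ph s)) /\
  (forall s c, is_distr (pl s c)) /\
  (forall s c a, cl a != c -> pl s c a = 0).

End MDP.

(* Main.v *)
Require Import Defs.
From mathcomp Require Import all_boot all_order all_algebra.
From mathcomp Require Import ring lra.
Import Order.TTheory GRing.Theory Num.Theory.
Local Open Scope ring_scope.

Theorem propositionB1 (R : realFieldType) (S A C : finType)
  (cl : A -> C) (r : S -> A -> R) (Tr : S -> A -> S -> R) (gamma : R)
  (hgamma0 : 0 <= gamma) (hgamma1 : gamma < 1)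
  (hTr : is_transition Tr)
  (Qstar : S -> A -> R) (Vstar : S -> R)
  (hQ : is_optimal_Q r Tr gamma Qstar Vstar)
  (ph : S -> C -> R) (pl : S -> C -> A -> R)
  (hpi : is_hier cl ph pl)
  (Vpi : S -> R)
  (hV : is_policy_value r Tr gamma (hier_policy cl ph pl) Vpi)
  (s : S) (astar : A)
  (hastar : forall a, Qstar s a <= Qstar s astar)
  (c : C) (hc : c != cl astar)
  (m : R) (hm : is_max_on [pred a | cl a == c] (Qstar s) m) :
  ph s c * (Qstar s astar - m) <= Vstar s - Vpi s.
Proof.
case: hQ => hmax hQe.
case: hpi => hph [hpl hsupp].
set pi := hier_policy cl ph pl.
have pi_ge0 : forall s' a, 0 <= pi s' a.
  by move=> s' a; rewrite /pi /hier_policy mulr_ge0 //; [case: (hph s')|case: (hpl s' (cl a))].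
have pi_sum : forall s' a, pi s' a = \sum_c' ph s' c' * pl s' c' a.
  move=> s' a; rewrite (bigD1 (cl a)) //= big1 ?addr0 // => c' hc'.
  by rewrite hsupp ?mulr0 // eq_sym.
have pi1 : forall s', \sum_a pi s' a = 1.
  move=> s'; under eq_bigr do rewrite pi_sum.
  rewrite exchange_big /=; under eq_bigr do rewrite -mulr_sumr.
  under eq_bigr do rewrite (proj2 (hpl s' _)) mulr1.
  by case: (hph s').
have VQ : forall s' a, Qstar s' a <= Vstar s'.
  by move=> s' a; case: (hmax s') => _; apply.
set g := fun s' => Vstar s' - Vpi s'.
have key : forall s', g s' = \sum_a pi s' a * (Vstar s' - Qstar s' a)
    + gamma * \sum_a pi s' a * \sum_s'' Tr s' a s'' * g s''.
  move=> s'; rewrite /g hV.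
  have E0 : Vstar s' = \sum_a pi s' a * Vstar s' by rewrite -mulr_suml pi1 mul1r.
  rewrite {1}E0.
  rewrite -sumrB mulr_sumr -big_split /=; apply: eq_bigr => a _.
  have E : \sum_s'' Tr s' a s'' * g s'' =
      \sum_s'' Tr s' a s'' * Vstar s'' - \sum_s'' Tr s' a s'' * Vpi s''.
    by rewrite -sumrB; apply: eq_bigr => x _; rewrite /g mulrBr.
  rewrite E hQe -/pi; ring.
have Tr_ge0 : forall s' a s'', 0 <= Tr s' a s'' by move=> s' a s''; case: (hTr s' a).
have g_ge0 : forall s', 0 <= g s'.
  pose s0 := Order.arg_min s xpredT g.
  have hs0 : forall x, g s0 <= g x.
    by rewrite /s0; case: arg_minP => // i _ H x; apply: H.
  suff : 0 <= g s0 by move=> H x; exact: le_trans H (hs0 x).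
  have h1 : gamma * g s0 <= g s0.
    rewrite [in X in _ <= X]key.
    apply: ler_wpDl.
      by apply: sumr_ge0 => a _; rewrite mulr_ge0 // subr_ge0.
    apply: ler_wpM2l => //.
    have -> : g s0 = \sum_a pi s0 a * \sum_s'' Tr s0 a s'' * g s0.
      under eq_bigr do rewrite -mulr_suml (proj2 (hTr s0 _)) mul1r.
      by rewrite -mulr_suml pi1 mul1r.
    apply: ler_sum => a _; apply: ler_wpM2l => //.
    by apply: ler_sum => x _; apply: ler_wpM2l.
  have : 0 <= (1 - gamma) * g s0 by rewrite mulrBl mul1r subr_ge0.
  by rewrite pmulr_rge0 // subr_gt0.
rewrite -/(g s) key.
apply: ler_wpDr.
  by apply: mulr_ge0 => //; apply: sumr_ge0 => a _; rewrite mulr_ge0 //;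
     apply: sumr_ge0 => x _; rewrite mulr_ge0.
have Vs : Vstar s = Qstar s astar.
  by apply/eqP; rewrite eq_le VQ andbT; case: (hmax s) => [[a _ ->] _].
rewrite Vs.
rewrite (bigID [pred a | cl a == c]) /=.
apply: ler_wpDr.
  by apply: sumr_ge0 => a _; rewrite mulr_ge0 // subr_ge0.
have -> : ph s c = \sum_(a | cl a == c) pi s a.
  rewrite /pi /hier_policy.
  rewrite (eq_bigr (fun a => ph s c * pl s c a)); last by move=> a /eqP ->.
  rewrite -mulr_sumr.
  case: (hpl s c) => _; rewrite (bigID [pred a | cl a == c]) /= [X in _ + X]big1 ?addr0.
    by move=> ->; rewrite mulr1.
  by move=> a ha; rewrite hsupp.
rewrite mulr_suml; apply: ler_sum => a ha; apply: ler_wpM2l => //.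
by rewrite lerB // (proj2 hm).
Qed.
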